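(* Assume (MA1), (MA2), (MA5) and (MA6) hold and let the sequences be generated by Algorithm R2N. If the algorithm generates only finitely many successful iterations, then there is $x^*\in\mathbb{R}^n$ with $x_k=x^*$ for all sufficiently large $k$, and $x^*$ is first-order stationary, i.e. $0\in\nabla f(x^* )+\partial h(x^* )$.
   Context: Setting: $f:\mathbb{R}^n\to\mathbb{R}$ continuously differentiable, $h:\mathbb{R}^n\to\mathbb{R}\cup\{+\infty\}$ proper lower semicontinuous; $\partial$ = limiting subdifferential; $\|\cdot\|$ Euclidean norm on vectors, spectral norm on matrices. A function $g$ is prox-bounded if there exist $\nu>0$, $x$ with $\inf_y g(y)+\frac1{2\nu}\|y-x\|^2>-\infty$; its threshold is the supremum of such $\nu$. For each $x$, $B(x)$ is symmetric and $\psi(\cdot;x):\mathbb{R}^n\to\mathbb{R}\cup\{+\infty\}$. $\varphi(s;x)=f(x)+\nabla f(x)^Ts+\tfrac12s^TB(x)s$, $m(s;x,\sigma)=\varphi(s;x)+\tfrac12\sigma\|s\|^2+\psi(s;x)$; $\varphi_{cp}(s;x)=f(x)+\nabla f(x)^Ts$, $m_{cp}(s;x,\nu^{-1})=\varphi_{cp}(s;x)+\tfrac12\nu^{-1}\|s\|^2+\psi(s;x)$, $P_{cp}(x,\nu^{-1})=\operatorname{argmin}_s m_{cp}(s;x,\nu^{-1})$, and for $s_{cp}\in P_{cp}(x,\nu^{-1})$, $\xi_{cp}(x,\nu^{-1})=f(x)+h(x)-(\varphi_{cp}(s_{cp};x)+\psi(s_{cp};x))$. (MA1): for every $x$, $\psi(\cdot;x)$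 is proper, lsc, prox-bounded with threshold $\lambda_x$, $\psi(0;x)=h(x)$, $\partial\psi(0;x)=\partial h(x)$. (MA2): there is $\lambda\in(0,+\infty]$ with $\lambda_x\ge\lambda$ for all $x$ (convention $1/\infty=0$). (MA5): there is $\kappa_m>0$ such that for all $k$, $|(f+h)(x_k+s_k)-(\varphi(s_k;x_k)+\psi(s_k;x_k))|\le\kappa_m(1+\|B_k\|)\|s_k\|^2$. (MA6): there are $\mu>0$ and $0\le p\le1$ such that $\|B_k\|\le\mu(1+|\mathcal S_k|^p)$ for all $k\in\mathbb N$ (equivalently $\max_{0\le j\le k}\|B_j\|\le\mu(1+|\mathcal S_k|^p)$ for all $k$). Algorithm R2N: constants $0<\theta_1<1<\theta_2$, $0<\eta_1\le\eta_2<1$, $0<\gamma_3\le1<\gamma_1\le\gamma_2$; $x_0$ with $h(x_0)<\infty$, $\sigma_0>0$. For $k=0,1,\dots$: choose symmetric $B_k=B(x_k)$; set $\nu_k=\theta_1/(\|B_k\|+\sigma_k)$; compute $s_{k,cp}\in P_{cp}(x_k,\nu_k^{-1})$ and $\xi_{cp}(x_k,\nu_k^{-1})$ (using $s_{k,cp}$); compute $s_k$ with $m(s_k;x_k,\sigma_k)\le m(s_{k,cp};x_k,\sigma_k)$; if $\|s_k\|>\theta_2\|s_{k,cp}\|$, reset $s_k=s_{k,cp}$; compute $\rho_k=\frac{(f+h)(x_k)-(f+h)(x_k+s_k)}{\varphi(0;x_k)+\psi(0;x_k)-\varphi(s_k;x_k)-\psi(s_k;x_k)}$ (extended arithmetic: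 $\pm\infty\cdot0=0$, $(\pm\infty)/(\pm\infty)=0$); if $\rho_k\ge\eta_1$ set $x_{k+1}=x_k+s_k$, else $x_{k+1}=x_k$; choose $\sigma_{k+1}\in[\gamma_3\sigma_k,\sigma_k]$ if $\rho_k\ge\eta_2$ (very successful), $\sigma_{k+1}\in[\sigma_k,\gamma_1\sigma_k]$ if $\eta_1\le\rho_k<\eta_2$, $\sigma_{k+1}\in[\gamma_1\sigma_k,\gamma_2\sigma_k]$ if $\rho_k<\eta_1$ (unsuccessful). $\mathcal S=\{k:\rho_k\ge\eta_1\}$ (successful iterations), $\mathcal S_k=\{i\in\mathcal S:i\le k\}$, $\mathcal U=\mathbb N\setminus\mathcal S$, $\mathcal U_k=\{i\in\mathcal U:i\le k\}$. *)

(* Defs.v *)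
(* R : realType, vectors of R^n are column vectors 'cV[R]_n,
   functions into R ∪ {+oo} are modelled as functions into \bar R that never take -oo. *)
From HB Require Import structures.
From mathcomp Require Import all_boot all_order all_algebra.
From mathcomp Require Import all_classical all_reals all_analysis.
Set Implicit Arguments. Unset Strict Implicit. Unset Printing Implicit Defensive.
Import Order.TTheory GRing.Theory Num.Theory.
Local Open Scope ring_scope.
Local Open Scope classical_set_scope.

Section Defs.
Variables (R : realType) (n : nat).
Local Notation vec := 'cV[R]_n.

Definition dotv (u v : vec) : R := \sum_(i < n) u i ord0 * v i ord0.
Definition enorm (u : vec) : R := Num.sqrt (dotv u u).

Definition opnorm (B : 'M[R]_n) : R :=
  sup [set enorm (B *m s) | s in [set s : vec | enorm s <= 1]].

Definition cvg_vec (u : nat -> vec) (l : vec) : Prop :=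
  forall eps : R, 0 < eps -> exists N : nat, forall k, (N <= k)%N -> enorm (u k - l) < eps.

Definition is_gradient (f : vec -> R) (grad : vec -> vec) : Prop :=
  forall x (eps : R), 0 < eps -> exists2 d : R, 0 < d &
    forall y, enorm (y - x) < d -> `|f y - f x - dotv (grad x) (y - x)| <= eps * enorm (y - x).
Definition continuous_vec (g : vec -> vec) : Prop :=
  forall x (eps : R), 0 < eps -> exists2 d : R, 0 < d &
    forall y, enorm (y - x) < d -> enorm (g y - g x) < eps.
Definition C1_with_gradient (f : vec -> R) (grad : vec -> vec) : Prop :=
  is_gradient f grad /\ continuous_vec grad.

Definition proper_fun (g : vec -> \bar R) : Prop :=
  (exists x, (g x < +oo)%E) /\ (forall x, g x != -oo%E).

Definition lsc_fun (g : vec -> \bar R) : Prop :=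
  forall x (c : R), (c%:E < g x)%E -> exists2 d : R, 0 < d &
    forall y, enorm (y - x) < d -> (c%:E < g y)%E.

Definition frechet_subdiff (g : vec -> \bar R) (x v : vec) : Prop :=
  g x \is a fin_num /\
  forall eps : R, 0 < eps -> exists2 d : R, 0 < d &
    forall y, enorm (y - x) < d ->
      (g x + (dotv v (y - x) - eps * enorm (y - x))%:E <= g y)%E.

Definition lim_subdiff (g : vec -> \bar R) (x v : vec) : Prop :=
  g x \is a fin_num /\
  exists (xs vs : nat -> vec),
    [/\ cvg_vec xs x, cvg_vec vs v,
        (forall eps : R, 0 < eps -> exists N : nat, forall k, (N <= k)%N ->
            (`|g (xs k) - g x| < eps%:E)%E)
      & forall k, frechet_subdiff g (xs k) (vs k)].

Definition prox_bounded_at (g : vec -> \bar R) (nu : R) : Prop :=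
  exists (x : vec) (M : R), forall y,
    (M%:E <= g y + ((2 * nu)^-1 * enorm (y - x) ^+ 2)%:E)%E.
Definition prox_bounded (g : vec -> \bar R) : Prop :=
  exists2 nu : R, 0 < nu & prox_bounded_at g nu.
Definition prox_threshold (g : vec -> \bar R) : \bar R :=
  ereal_sup [set nu%:E | nu in [set nu : R | 0 < nu /\ prox_bounded_at g nu]].

Definition phi (f : vec -> R) (grad : vec -> vec) (B : vec -> 'M[R]_n) (x s : vec) : R :=
  f x + dotv (grad x) s + 2^-1 * dotv s (B x *m s).
Definition mmodel f grad B (psi : vec -> vec -> \bar R) (x : vec) (sigma : R) (s : vec)
  : \bar R :=
  ((phi f grad B x s + 2^-1 * sigma * enorm s ^+ 2)%:E + psi x s)%E.
Definition phi_cp (f : vec -> R) (grad : vec -> vec) (x s : vec) : R :=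
  f x + dotv (grad x) s.
(* m_cp(s; x, nuinv) with nuinv = ν^{-1} *)
Definition mcp f grad (psi : vec -> vec -> \bar R) (x : vec) (nuinv : R) (s : vec)
  : \bar R :=
  ((phi_cp f grad x s + 2^-1 * nuinv * enorm s ^+ 2)%:E + psi x s)%E.

Definition is_argmin (F : vec -> \bar R) (s : vec) : Prop := forall t, (F s <= F t)%E.

(** extended division used for rho: a / b, with ±oo*0 = 0 and (±oo)/(±oo) = 0,
    finite / (±oo) = 0 *)
Definition ediv (a b : \bar R) : \bar R :=
  match b with
  | EFin r => (a * (r^-1)%:E)%E
  | _ => 0%E
  end.

Definition r2n_rho f grad (h : vec -> \bar R) B (psi : vec -> vec -> \bar R)
  (x s : nat -> vec) (k : nat) : \bar R :=
  ediv (((f (x k))%:E + h (x k)) - ((f (x k + s k)%R)%:E + h (x k + s k)%R))%E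
       (((phi f grad B (x k) 0%R)%:E + psi (x k) 0%R)
          - ((phi f grad B (x k) (s k))%:E + psi (x k) (s k)))%E.

Definition R2N_generated f grad (h : vec -> \bar R) (B : vec -> 'M[R]_n)
  (psi : vec -> vec -> \bar R)
  (theta1 theta2 eta1 eta2 gamma1 gamma2 gamma3 : R) (x0 : vec) (sigma0 : R)
  (x : nat -> vec) (sigma : nat -> R) (scp st s : nat -> vec) : Prop :=
  [/\ [/\ 0 < theta1, theta1 < 1 & 1 < theta2],
      [/\ 0 < eta1, eta1 <= eta2 & eta2 < 1],
      [/\ 0 < gamma3, gamma3 <= 1, 1 < gamma1 & gamma1 <= gamma2],
      [/\ (h x0 < +oo)%E, 0 < sigma0, x 0%N = x0 & sigma 0%N = sigma0] &
      forall k : nat,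
        let nuk := theta1 / (opnorm (B (x k)) + sigma k) in
        let rhok := r2n_rho f grad h B psi x s k in
        [/\ is_argmin (mcp f grad psi (x k) nuk^-1) (scp k),
            (mmodel f grad B psi (x k) (sigma k) (st k)
               <= mmodel f grad B psi (x k) (sigma k) (scp k))%E,
            s k = (if theta2 * enorm (scp k) < enorm (st k) then scp k else st k),
            x k.+1 = (if (eta1%:E <= rhok)%E then x k + s k else x k) &
            [/\ (eta2%:E <= rhok)%E ->
                   gamma3 * sigma k <= sigma k.+1 /\ sigma k.+1 <= sigma k,
                (eta1%:E <= rhok)%E -> (rhok < eta2%:E)%E ->
                   sigma k <= sigma k.+1 /\ sigma k.+1 <= gamma1 * sigma k
              & (rhok < eta1%:E)%E ->
                   gamma1 * sigma k <= sigma k.+1 /\ sigma k.+1 <= gamma2 * sigma k]]].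

Definition card_succ f grad h B psi (eta1 : R) (x s : nat -> vec) (k : nat) : nat :=
  (\sum_(i < k.+1) ((eta1%:E <= r2n_rho f grad h B psi x s i)%E : nat))%N.

End Defs.

(* Main.v *)
Require Import Defs.
From HB Require Import structures.
From mathcomp Require Import all_boot all_order all_algebra.
From mathcomp Require Import all_classical all_reals all_analysis.
From mathcomp Require Import ring lra.
Import Order.TTheory GRing.Theory Num.Theory.
Local Open Scope ring_scope.
Set Implicit Arguments. Unset Strict Implicit.

Section Helpers.
Variables (R : realType) (n : nat).
Local Notation vec := 'cV[R]_n.

Lemma dotv0r (u : vec) : dotv u 0 = 0.
Proof. by rewrite /dotv big1 // => i _; rewrite mxE mulr0. Qed.

Lemma dotvr0 (u : vec) : dotv 0 u = 0.
Proof. by rewrite /dotv big1 // => i _; rewrite mxE mul0r. Qed.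

Lemma dotv_ge0 (u : vec) : 0 <= dotv u u.
Proof. by rewrite /dotv sumr_ge0 // => i _; rewrite -expr2 sqr_ge0. Qed.

Lemma enorm_ge0 (u : vec) : 0 <= enorm u.
Proof. exact: sqrtr_ge0. Qed.

Lemma enorm0 : enorm (0 : vec) = 0.
Proof. by rewrite /enorm dotv0r sqrtr0. Qed.

Lemma enorm_sq (u : vec) : enorm u ^+ 2 = dotv u u.
Proof. by rewrite /enorm sqr_sqrtr // dotv_ge0. Qed.

Lemma coord_le (u : vec) i : `|u i ord0| <= enorm u.
Proof.
rewrite -sqrtr_sqr /enorm ler_sqrt ?dotv_ge0 // /dotv (bigD1 i) //= -expr2.
by rewrite lerDl sumr_ge0 // => j _; rewrite -expr2 sqr_ge0.
Qed.

Definition absum (M : 'M[R]_n) : R := \sum_i \sum_j `|M i j|.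

Lemma absum_ge0 M : 0 <= absum M.
Proof. by apply: sumr_ge0 => i _; apply: sumr_ge0. Qed.

Lemma quad_le (M : 'M[R]_n) (u : vec) : dotv u (M *m u) <= absum M * enorm u ^+ 2.
Proof.
rewrite /dotv /absum mulr_suml; apply: ler_sum => i _.
rewrite mxE mulr_sumr mulr_suml; apply: ler_sum => j _.
apply: le_trans (ler_norm _) _.
rewrite !normrM expr2 mulrCA; apply: ler_wpM2l => //.
have e0 := enorm_ge0 u.
by apply: ler_pM => //; apply: coord_le.
Qed.

Lemma fin_of_le (r q : R) (y : \bar R) : y != -oo%E -> (r%:E + y <= q%:E)%E ->
  exists p, y = p%:E.
Proof. by case: y => [p| |] // _ _; exists p. Qed.

Lemma psi_fin (f : vec -> R) grad (B : vec -> 'M[R]_n) (psi : vec -> vec -> \bar R)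
  xk c sig (a st b : vec) theta2 H :
  is_argmin (mcp f grad psi xk c) a ->
  (mmodel f grad B psi xk sig st <= mmodel f grad B psi xk sig a)%E ->
  b = (if theta2 * enorm a < enorm st then a else st) ->
  psi xk 0 = H%:E ->
  (forall t, psi xk t != -oo%E) ->
  exists pa pb, psi xk a = pa%:E /\ psi xk b = pb%:E.
Proof.
move=> Hmin Hm Hb H0 Hpr.
have h1 := Hmin 0; rewrite /mcp H0 -EFinD in h1.
have [pa Hpa] := fin_of_le (Hpr a) h1.
move: Hm; rewrite /mmodel Hpa -EFinD => Hm.
have [pst Hpst] := fin_of_le (Hpr st) Hm.
exists pa; rewrite Hb; case: ifP => _; [exists pa | exists pst]; by [].
Qed.

Lemma step_ok (f : vec -> R) grad (h : vec -> \bar R) (B : vec -> 'M[R]_n)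
  (psi : vec -> vec -> \bar R) (x s : nat -> vec) k c sig (a st : vec) theta2 H
  kappa Bn C eta1 :
  is_argmin (mcp f grad psi (x k) c) a ->
  (mmodel f grad B psi (x k) sig st <= mmodel f grad B psi (x k) sig a)%E ->
  s k = (if theta2 * enorm a < enorm st then a else st) ->
  psi (x k) 0 = H%:E -> h (x k) = H%:E ->
  (forall t, psi (x k) t != -oo%E) -> h (x k + s k) != -oo%E ->
  (`| ((f (x k + s k)%R)%:E + h (x k + s k)%R)
         - ((phi f grad B (x k) (s k))%:E + psi (x k) (s k)) |
       <= (kappa * (1 + Bn) * enorm (s k) ^+ 2)%:E)%E ->
  (forall t, dotv t (B (x k) *m t) <= C * enorm t ^+ 2) ->
  a != 0 -> 1 <= c - C - sig -> 2 * kappa * (1 + Bn) <= sig * (1 - eta1) ->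
  0 < eta1 -> eta1 < 1 -> 0 < sig ->
  (eta1%:E <= r2n_rho f grad h B psi x s k)%E.
Proof.
move=> Hmin Hm Hb H0 Hh Hpr Hhpr H5 HC Ha Hc Hs He1 He2 Hsig.
have [pa [pb [Hpa Hpb]]] := psi_fin Hmin Hm Hb H0 Hpr.
have h1 := Hmin 0; rewrite /mcp H0 Hpa -!EFinD lee_fin /phi_cp dotv0r enorm0 in h1.
have Hmb : (phi f grad B (x k) (s k) + 2^-1 * sig * enorm (s k) ^+ 2 + pb <=
           phi f grad B (x k) a + 2^-1 * sig * enorm a ^+ 2 + pa).
  move: Hm Hpb; rewrite Hb; case: ifP => _ Hm Hpb.
    by move: Hpb; rewrite Hpa => -[->].
  by move: Hm; rewrite /mmodel Hpa Hpb -!EFinD lee_fin.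
move: H5; rewrite Hpb.
case Ehb: (h (x k + s k)) Hhpr => [hb| |] // _.
rewrite -!EFinD /= lee_fin => H5.
rewrite /r2n_rho Hh H0 Hpb Ehb -!EFinD /ediv -EFinM lee_fin.
have Hqa := HC a.
have A0 : 0 < enorm a ^+ 2.
  rewrite enorm_sq lt_def dotv_ge0 andbT; apply: contra Ha => /eqP Ha0.
  apply/eqP/matrixP => i j; rewrite (ord1 j) mxE.
  have hpos : forall i : 'I_n, true -> 0 <= a i ord0 * a i ord0.
    by move=> i' _; rewrite -expr2 sqr_ge0.
  rewrite /dotv in Ha0.
  have := @psumr_eq0P _ _ _ _ hpos Ha0 i isT.
  by move/eqP; rewrite mulf_eq0 orbb => /eqP.
set A2 := enorm a ^+ 2 in h1 Hmb Hqa A0.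
set B2 := enorm (s k) ^+ 2 in Hmb H5.
have B20 : 0 <= B2 by rewrite sqr_ge0.
move: h1 Hmb Hqa H5; rewrite /phi dotvr0 dotv0r.
set ga := dotv (grad (x k)) a; set qa := dotv a _; set gb := dotv (grad (x k)) (s k).
set qb := dotv (s k) _; set fk := f (x k); set fb := f _.
move=> h1 Hmb Hqa H5.
have hcA : A2 <= (c - C - sig) * A2 by rewrite -{1}(mul1r A2) ler_wpM2r // ltW.
set D := fk + 0 + 2^-1 * 0 + H - (fk + gb + 2^-1 * qb + pb).
have hD : A2 / 2 + sig / 2 * B2 <= D.
  rewrite /D; move: hcA; rewrite !mulrBl => hcA; rewrite expr0n /= mulr0 in h1; clearbody A2 B2 ga qa gb qb fk fb; lra.
have sB : 0 <= sig * B2 by rewrite mulr_ge0 // ltW.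
have hD0 : 0 < D by apply: lt_le_trans hD; lra.
rewrite ler_pdivlMr //.
have : sig * (1 - eta1) * B2 <= (1 - eta1) * (2 * D).
  have h2 : sig * B2 <= 2 * D by lra.
  have he : 0 <= 1 - eta1 by rewrite subr_ge0 ltW.
  have := ler_wpM2l he h2; lra.
have : 2 * kappa * (1 + Bn) * B2 <= sig * (1 - eta1) * B2 by rewrite ler_wpM2r.
move: H5; rewrite ler_norml => /andP[_ H5].
rewrite /D; lra.
Qed.

Lemma dotvNl (u v : vec) : dotv (- u) v = - dotv u v.
Proof. by rewrite /dotv -sumrN; apply: eq_bigr => i _; rewrite mxE mulNr. Qed.

Lemma fermat (f : vec -> R) grad (psi : vec -> vec -> \bar R) (h : vec -> \bar R)
  xk c H :
  is_argmin (mcp f grad psi xk c) 0 -> 0 < c -> psi xk 0 = H%:E ->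
  (forall v, lim_subdiff (psi xk) 0 v <-> lim_subdiff h xk v) ->
  lim_subdiff h xk (- grad xk).
Proof.
move=> Hmin c0 H0 Heq; apply/Heq; split; first by rewrite H0.
exists (fun _ => 0), (fun _ => - grad xk); split.
- by move=> e e0; exists 0%N => k _; rewrite subrr enorm0.
- by move=> e e0; exists 0%N => k _; rewrite subrr enorm0.
- by move=> e e0; exists 0%N => k _; rewrite H0 -EFinB subrr /= normr0 lte_fin.
move=> _; split; first by rewrite H0.
move=> e e0; exists (2 * e / c); first by rewrite divr_gt0 // mulr_gt0.
move=> y; rewrite subr0 => hy.
have := Hmin y; rewrite /mcp H0 /phi_cp dotv0r enorm0 dotvNl.
case: (psi xk y) => [p| |] //; last first.
  by move=> _; rewrite leey.
rewrite -!EFinD !lee_fin => hm.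
have ey := enorm_ge0 y.
have hc : c * enorm y <= 2 * e.
  by rewrite mulrC -ler_pdivlMr // ltW.
have : c * enorm y * enorm y <= 2 * e * enorm y by rewrite ler_wpM2r.
move: hm; rewrite expr0n /= mulr0 expr2; lra.
Qed.

Lemma hfin_step (f : vec -> R) grad (h : vec -> \bar R) (B : vec -> 'M[R]_n)
  (psi : vec -> vec -> \bar R) xk sk c sig (a st : vec) theta2 H r :
  is_argmin (mcp f grad psi xk c) a ->
  (mmodel f grad B psi xk sig st <= mmodel f grad B psi xk sig a)%E ->
  sk = (if theta2 * enorm a < enorm st then a else st) ->
  psi xk 0 = H%:E ->
  (forall t, psi xk t != -oo%E) -> h (xk + sk) != -oo%E ->
  (`| ((f (xk + sk)%R)%:E + h (xk + sk)%R)
         - ((phi f grad B xk sk)%:E + psi xk sk) | <= r%:E)%E ->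
  exists H', h (xk + sk) = H'%:E.
Proof.
move=> Hmin Hm Hb H0 Hpr Hhpr H5.
have [pa [pb [_ Hpb]]] := psi_fin Hmin Hm Hb H0 Hpr.
move: H5; rewrite Hpb.
by case: (h (xk + sk)) Hhpr => [hb| |] // _ _; exists hb.
Qed.

Lemma big_T (a b : R) : 0 < a -> exists T, 0 <= T /\ forall sg, T <= sg -> b <= a * sg.
Proof.
move=> a0; exists (`|b| / a); split; first by rewrite divr_ge0 // ltW.
move=> sg hs; apply: le_trans (ler_norm b) _.
by rewrite mulrC -ler_pdivrMr.
Qed.
End Helpers.
Unset Implicit Arguments.
Theorem theorem6p3 (R : realType) (n : nat)
  (f : 'cV[R]_n -> R) (grad : 'cV[R]_n -> 'cV[R]_n) (h : 'cV[R]_n -> \bar R)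
  (B : 'cV[R]_n -> 'M[R]_n) (psi : 'cV[R]_n -> 'cV[R]_n -> \bar R)
  (theta1 theta2 eta1 eta2 gamma1 gamma2 gamma3 : R) (x0 : 'cV[R]_n) (sigma0 : R)
  (x : nat -> 'cV[R]_n) (sigma : nat -> R) (scp st s : nat -> 'cV[R]_n) :
  (* standing assumptions on f and h *)
  C1_with_gradient f grad ->
  proper_fun h -> lsc_fun h ->
  (* B(x) symmetric *)
  (forall y, (B y)^T = B y) ->
  (* (MA1) *)
  (forall y, [/\ proper_fun (psi y), lsc_fun (psi y), prox_bounded (psi y),
                 psi y 0 = h y &
                 forall v, lim_subdiff (psi y) 0 v <-> lim_subdiff h y v]) ->
  (* (MA2) *)
  (exists lam : \bar R, (0 < lam)%E /\ forall y, (lam <= prox_threshold (psi y))%E) ->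
  (* the iterates are generated by Algorithm R2N *)
  R2N_generated f grad h B psi theta1 theta2 eta1 eta2 gamma1 gamma2 gamma3 x0 sigma0
    x sigma scp st s ->
  (* (MA5) *)
  (exists2 kappa : R, 0 < kappa & forall k,
     (`| ((f (x k + s k)%R)%:E + h (x k + s k)%R)
         - ((phi f grad B (x k) (s k))%:E + psi (x k) (s k)) |
       <= (kappa * (1 + opnorm (B (x k))) * enorm (s k) ^+ 2)%:E)%E) ->
  (* (MA6) *)
  (exists mu p : R, [/\ 0 < mu, 0 <= p, p <= 1 &
     forall k, opnorm (B (x k))
               <= mu * (1 + (card_succ f grad h B psi eta1 x s k)%:R `^ p)]) ->
  (* finitely many successful iterations *)
  (exists K : nat, forall k, (K <= k)%N ->
     ~ (eta1%:E <= r2n_rho f grad h B psi x s k)%E) ->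
  exists xstar : 'cV[R]_n,
    (exists K : nat, forall k, (K <= k)%N -> x k = xstar) /\
    (exists v : 'cV[R]_n, lim_subdiff h xstar v /\ grad xstar + v = 0).
Proof.
Proof.
move=> _ Hhp _ _ HMA1 _ [[Ht1 Ht1' Ht2] [He1 He12 He2] [Hg3 Hg3' Hg1 Hg12]
  [Hx0 Hs0 Ex0 Es0] Hk] [kap kap0 H5] _ [K HK].
have Hk' : forall k, _ := fun k => ltac:(let t := eval cbv zeta in (Hk k) in exact t).
have sig_pos : forall k, 0 < sigma k.
  elim => [|k IH]; first by rewrite Es0.
  have [_ _ _ _ [S1 S2 S3]] := Hk' k.
  have [hl|hl] := ltP (r2n_rho f grad h B psi x s k) eta1%:E.
    have [h1 _] := S3 hl.
    have : 0 < gamma1 * sigma k by rewrite mulr_gt0 // (lt_trans ltr01).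
    lra.
  have [h2|h2] := ltP (r2n_rho f grad h B psi x s k) eta2%:E.
    have [h1 _] := S2 hl h2; lra.
  have [h1 _] := S1 h2.
  have : 0 < gamma3 * sigma k by rewrite mulr_gt0.
  lra.
have Hpsi k : psi (x k) 0 = h (x k) by have [_ _ _ -> _] := HMA1 (x k).
have Hpr k t : psi (x k) t != -oo%E by have [[_ P] _ _ _ _] := HMA1 (x k).
have hfin : forall k, exists H, h (x k) = H%:E.
  elim => [|k [Hv EH]].
    by rewrite Ex0; move: Hx0 (Hhp.2 x0); case: (h x0) => [r| |] // _ _; exists r.
  have [Hmin Hm Hb Hx _] := Hk' k.
  rewrite Hx; case: ifP => _; last by exists Hv.
  apply: (hfin_step Hmin Hm Hb _ (Hpr k) (Hhp.2 _) (H5 k)).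
  by rewrite Hpsi EH.
have xK : forall m, x (K + m)%N = x K.
  elim => [|m IH]; first by rewrite addn0.
  have [_ _ _ Hx _] := Hk' (K + m)%N.
  rewrite addnS Hx; case: ifP => hr; last exact: IH.
  by have := HK (K + m)%N (leq_addr m K) hr.
have g0 : 0 < (gamma1 - 1) * sigma K by rewrite mulr_gt0 // subr_gt0.
have sig_grow : forall m, sigma K + m%:R * ((gamma1 - 1) * sigma K) <= sigma (K + m)%N.
  elim => [|m IH]; first by rewrite addn0 mul0r addr0.
  have [_ _ _ _ [_ _ S3]] := Hk' (K + m)%N.
  have hl : (r2n_rho f grad h B psi x s (K + m)%N < eta1%:E)%E.
    by rewrite ltNge; apply/negP; apply: HK; exact: leq_addr.
  have [h1 _] := S3 hl; rewrite addnS -addn1 natrD.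
  have q0 : 0 <= m%:R * ((gamma1 - 1) * sigma K) by rewrite mulr_ge0 // ltW.
  have q : (gamma1 - 1) * sigma K <= (gamma1 - 1) * sigma (K + m)%N.
    apply: ler_wpM2l; [by rewrite subr_ge0 ltW | lra].
  lra.
have C0 := absum_ge0 (B (x K)).
have [T1 [T10 HT1]] := @big_T _ (1 - theta1)
  (theta1 + theta1 * absum (B (x K)) - opnorm (B (x K))) ltac:(by rewrite subr_gt0).
have [T2 [T20 HT2]] := @big_T _ (1 - eta1)
  (2 * kap * (1 + opnorm (B (x K)))) ltac:(by rewrite subr_gt0 (le_lt_trans He12 He2)).
have Tq0 : 0 <= (T1 + T2) / ((gamma1 - 1) * sigma K) by rewrite divr_ge0 ?addr_ge0 // ltW.
have hm := archi_boundP Tq0.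
set m := Num.Def.archi_bound _ in hm.
have hT : T1 + T2 <= sigma (K + m)%N.
  move: hm; rewrite ltr_pdivrMr // => hm.
  have := sig_grow m; have := sig_pos K; lra.
set k := (K + m)%N in hT.
have Exk : x k = x K := xK m.
have sk0 := sig_pos k.
have hBS : theta1 * (1 + absum (B (x k)) + sigma k) <= opnorm (B (x k)) + sigma k.
  rewrite Exk; have := HT1 (sigma k) ltac:(lra); lra.
have th0 : 0 < theta1 * (1 + absum (B (x k)) + sigma k).
  by rewrite mulr_gt0 // Exk; lra.
have hc : 1 + absum (B (x k)) + sigma k <=
          (theta1 / (opnorm (B (x k)) + sigma k))^-1.
  by rewrite invf_div ler_pdivlMr // mulrC.
have [H EH] := hfin k.
have [Hmin Hm Hb _ _] := Hk' k.
have H0 : psi (x k) 0 = H%:E by rewrite Hpsi EH.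
have [HMA1a _ _ _ Heq] := HMA1 (x k).
case: (eqVneq (scp k) 0) => Ha.
  rewrite Ha in Hmin.
  exists (x K); split; first by exists K => j hj; rewrite -(subnKC hj) xK.
  exists (- grad (x K)); split; last by rewrite subrr.
  rewrite -Exk; apply: (fermat Hmin _ H0 Heq).
  by apply: lt_le_trans hc; have := absum_ge0 (B (x k)); lra.
exfalso; apply: (HK k (leq_addr _ _)).
apply: (step_ok Hmin Hm Hb H0 EH (Hpr k) (Hhp.2 _) (H5 k) (quad_le (B (x k))) Ha
   _ _ He1 (le_lt_trans He12 He2) sk0).
- lra.
- by rewrite Exk [_ * (1 - eta1)]mulrC; apply: HT2; lra.
Qed.
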